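(* Let $\Gamma$ act by isometries on metric spaces $(X,d_X)$ and $(Y,d_Y)$, and let $\hat X\supseteq X$ be a partial compactification such that the $\Gamma$-action extends to a proper cocompact action on $\hat X\times Y$; let $d_\Gamma$ be a $\Gamma$-invariant proper metric on $\hat X\times Y$ inducing its topology. Let $(x_i,y_i)$ and $(x_i',y_i')$ be sequences in $\hat X\times Y$. If $d_Y(y_i,y_i')\to\infty$, then $d_\Gamma((x_i,y_i),(x_i',y_i'))\to\infty$.
   Context: The action of $\Gamma$ on $\hat X\times Y$ is diagonal; $d_X$, $d_Y$ are $\Gamma$-invariant. A metric is proper if closed bounded sets are compact. *)

(* Defs.v *)
From HB Require Import structures.
From mathcomp Require Import all_boot all_order all_algebra.
From mathcomp Require Import all_classical all_reals all_analysis.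
From mathcomp Require Import monoid.
Set Implicit Arguments.
Unset Strict Implicit.
Unset Printing Implicit Defensive.
Import Order.TTheory GRing.Theory Num.Theory.
Local Open Scope classical_set_scope.
Local Open Scope ring_scope.

Definition is_action (G : groupType) (T : Type) (act : G -> T -> T) : Prop :=
  (forall t, act (@one G) t = t) /\
  (forall (g h : G) t, act (@mul G g h) t = act g (act h t)).

Definition is_metric (R : realType) (T : Type) (d : T -> T -> R) : Prop :=
  [/\ forall x y, 0 <= d x y,
      forall x y, d x y = 0 <-> x = y,
      forall x y, d x y = d y x &
      forall x y z, d x z <= d x y + d y z].

Definition isometric_action (R : realType) (G : groupType) (M : metricType R)
  (act : G -> M -> M) : Prop :=
  is_action act /\ forall g a b, mdist (act g a) (act g b) = mdist a b.

Definition metric_induces_topology (R : realType) (T : topologicalType)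
  (d : T -> T -> R) : Prop :=
  forall (p : T) (U : set T),
    nbhs p U <-> exists2 e : R, 0 < e & [set q | d p q < e] `<=` U.

Definition proper_metric (R : realType) (T : topologicalType)
  (d : T -> T -> R) : Prop :=
  forall A : set T, closed A ->
    (exists (c : T) (r : R), forall a, A a -> d c a <= r) -> compact A.

Definition partial_compactification (X Xh : topologicalType) (iota : X -> Xh)
  : Prop :=
  [/\ injective iota, continuous iota,
      (forall U : set X, open U -> open (iota @` U)) &
      closure (range iota) = setT].

Definition proper_action (G : groupType) (T : topologicalType)
  (act : G -> T -> T) : Prop :=
  (forall g, continuous (act g)) /\
  forall K : set T, compact K ->
    finite_set [set g : G | (act g @` K `&` K) !=set0].

Definition cocompact_action (G : groupType) (T : topologicalType)
  (act : G -> T -> T) : Prop :=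
  exists2 K : set T, compact K &
    forall p, exists g : G, exists2 k, K k & p = act g k.

(* Main.v *)
Require Import Defs.
From HB Require Import structures.
From mathcomp Require Import all_boot all_order all_algebra.
From mathcomp Require Import all_classical all_reals all_analysis.
From mathcomp Require Import monoid.
From mathcomp Require Import lra.
Import Order.TTheory GRing.Theory Num.Theory.
Local Open Scope classical_set_scope.
Local Open Scope ring_scope.

Lemma compact_incr (T : topologicalType) (A : set T) (U : nat -> set T) :
  compact A -> (forall n, open (U n)) ->
  (forall m n, (m <= n)%N -> U m `<=` U n) ->
  A `<=` \bigcup_n U n -> exists n, A `<=` U n.
Proof.
move=> cA oU mU cov.
apply: contrapT => nex.
have ne : forall n, (A `\` U n) !=set0.
  move=> n; apply: contrapT => /set0P/negP; rewrite negbK => /eqP.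
  rewrite setD_eq0 => h; apply: nex; by exists n.
have FF : Filter (filter_from setT (fun n => A `\` U n)).
  apply: filter_from_filter; first by exists 0%N.
  move=> i j _ _; exists (maxn i j) => // x [Ax nU]; split; split => //.
    by move=> Ui; apply: nU; apply: mU Ui; exact: leq_maxl.
  by move=> Ui; apply: nU; apply: mU Ui; exact: leq_maxr.
have PF : ProperFilter (filter_from setT (fun n => A `\` U n)).
  by apply: filter_from_proper => i _; exact: ne.
have [x [Ax clx]] := cA _ PF (ex_intro2 _ _ 0%N I (fun x (h : (A `\` U 0%N) x) => h.1)).
have [m _ Um] := cov x Ax.
have [y [[_ nUy] Uy]] := clx (A `\` U m) (U m) (ex_intro2 _ _ m I (fun z h => h)) (open_nbhs_nbhs (conj (oU m) Um)).
by apply: nUy.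
Qed.

Lemma nat_unbounded {R : realType} (r : R) : exists n : nat, r < n%:R.
Proof.
exists (Num.bound `|r|).
exact: (le_lt_trans (ler_norm r) (archi_boundP (normr_ge0 r))).
Qed.

Theorem lemma6p5 (R : realType) (Gam : groupType)
  (X : metricType R) (Xh : topologicalType) (Y : metricType R)
  (iota : X -> Xh)
  (actX : Gam -> X -> X) (actXh : Gam -> Xh -> Xh) (actY : Gam -> Y -> Y)
  (dG : (Xh * Y)%type -> (Xh * Y)%type -> R) :
  isometric_action actX ->
  isometric_action actY ->
  partial_compactification iota ->
  is_action actXh ->
  (forall g a, actXh g (iota a) = iota (actX g a)) ->
  proper_action (fun g (p : (Xh * Y)%type) => (actXh g p.1, actY g p.2)) ->
  cocompact_action (fun g (p : (Xh * Y)%type) => (actXh g p.1, actY g p.2)) ->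
  is_metric dG ->
  (forall g p q, dG (actXh g p.1, actY g p.2) (actXh g q.1, actY g q.2)
                 = dG p q) ->
  proper_metric dG ->
  metric_induces_topology dG ->
  forall (x x' : nat -> Xh) (y y' : nat -> Y),
    (fun i => mdist (y i) (y' i)) @ \oo --> +oo ->
    (fun i => dG (x i, y i) (x' i, y' i)) @ \oo --> +oo.
Proof.
move=> _ [[actY1 actYM] isoY] _ [actX1 actXM] _ _ [K cK cover] [dG0 dGE dGs dGt]
  dGinv dGprop dGtop x x' y y' yinf.
have dGopen : forall c r, open [set w | dG c w < r].
  move=> c r; rewrite openE => p /= cp; rewrite /interior.
  apply/dGtop; exists (r - dG c p); first by move: cp; rewrite /=; lra.
  move=> q /= pq; apply: (le_lt_trans (dGt c p q)).
  by rewrite -ltrBrDl.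
have key : forall C, exists C', forall p q, dG p q <= C -> mdist p.2 q.2 <= C'.
  move=> C.
  have [[k0 Kk0]|K0] := pselect (K !=set0); last first.
    exists 0 => p q _; have [g [k Kk _]] := cover p.
    by exfalso; apply: K0; exists k.
  have [N KN] : exists N : nat, K `<=` [set w | dG k0 w < N%:R].
    apply: compact_incr => //.
      move=> m n mn w /= h; apply: (lt_le_trans h); by rewrite ler_nat.
    move=> w _; have [n nlt] := nat_unbounded (dG k0 w); by exists n.
  pose B := [set z | exists2 k, K k & dG k z <= C].
  have cA : compact (closure B).
    apply: dGprop; first exact: closed_closure.
    exists k0, (N%:R + C + 1) => z clz.
    have [b [[k Kk kb] bz]] := clz [set q | dG z q < 1]
      (proj2 (dGtop z _) (ex_intro2 _ _ 1 ltr01 (fun q h => h))).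
    rewrite /= in bz.
    have h1 := dGt k0 k b; have h2 := dGt k0 b z; have h3 := KN k Kk.
    rewrite /= in h3; rewrite dGs in bz; lra.
  have [M AM] : exists M : nat, closure B `<=` [set w | mdist k0.2 w.2 < M%:R].
    apply: compact_incr => //.
    - move=> n; apply: (@open_comp _ _ snd [set v | mdist k0.2 v < n%:R]).
        by move=> w _; exact: cvg_snd.
      rewrite openE => v /= hv; rewrite /interior; apply/nbhs_ballP.
      exists (n%:R - mdist k0.2 v); first by move: hv; rewrite /=; lra.
      move=> u; rewrite ballEmdist /= => vu.
      move: (metric_triangle k0.2 v u) hv vu => /=; lra.
    - move=> m n mn w /= h; apply: (lt_le_trans h); by rewrite ler_nat.
    - move=> w _; have [n nlt] := nat_unbounded (mdist k0.2 w.2); by exists n.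
  exists (M%:R + M%:R) => p q pq.
  have [g [k Kk pE]] := cover p.
  pose q' := (actXh (g^-1)%g q.1, actY (g^-1)%g q.2).
  have qE : q = (actXh g q'.1, actY g q'.2).
    by rewrite /q' /= -actXM -actYM mulgV actX1 actY1; case: q {pq q'}.
  move: pq; rewrite pE qE dGinv => pq; rewrite /= isoY.
  have Ak : closure B k by apply: subset_closure; exists k => //; rewrite (proj2 (dGE k k) erefl); exact: le_trans (dG0 _ _) pq.
  have Aq : closure B q' by apply: subset_closure; exists k.
  have h1 := AM _ Ak; have h2 := AM _ Aq; rewrite /= in h1 h2.
  have := metric_triangle k.2 k0.2 q'.2; rewrite (metric_sym k.2 k0.2); lra.
apply/cvgryPge => A.
have [C' HC] := key A.
move/cvgryPge: yinf => /(_ (C' + 1)).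
apply: filterS => n hn.
rewrite leNgt; apply/negP => /ltW /HC /= h; lra.
Qed.
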